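(* (i) Let two reciprocal $(6,10)$ figures with vertices $\Psi,\Psi_{12},\Phi_1,\Phi_2,\Phi_{13},\Phi_{23}$ and $\Psi_1,\Psi_2,\Phi,\Phi_3,\Phi_{12},\Phi_{123}$ be given, and define the real dilations $a,b,c,d,e,a_3,b_2,c_1,d_2,e_1$ by $$\Phi_{12}-\Phi=a(\Phi_1-\Phi_2),\ \Phi_{13}-\Psi=b(\Psi_1-\Phi_3),\ \Phi_{23}-\Psi=c(\Psi_2-\Phi_3),\ \Psi_1-\Phi=d(\Phi_1-\Psi),\ \Psi_2-\Phi=e(\Phi_2-\Psi),$$ $$\Phi_{123}-\Phi_3=a_3(\Phi_{13}-\Phi_{23}),\ \Phi_{123}-\Psi_2=b_2(\Psi_{12}-\Phi_{23}),\ \Phi_{123}-\Psi_1=c_1(\Psi_{12}-\Phi_{13}),$$ $$\Psi_{12}-\Phi_2=d_2(\Phi_{12}-\Psi_2),\ \Psi_{12}-\Phi_1=e_1(\Phi_{12}-\Psi_1).$$ Then $$a_3=\frac{a}{bc(ad+ed-ea)+a(b-c)},\quad b_2=\frac{a_3(c-b)+1}{c},\quad c_1=\frac{a_3(c-b)+1}{b},\quad d_2=\frac{d}{ad+ed-ea},\quad e_1=\frac{e}{ad+ed-ea}.$$ (ii) Conversely, let $\Phi,\Phi_1,\Phi_2,\Phi_3,\Psi$ be five generic points of $\mathbb{C}$, let $a,b,c,d,e\in\mathbb{R}$ be arbitrary non-vanishing real numbers and let $a_3,b_2,c_1,d_2,e_1$ be given by the formulas above. Then the ten linear equations above are compatible,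 and the points $\Psi,\Psi_{12},\Phi_1,\Phi_2,\Phi_{13},\Phi_{23}$ and $\Psi_1,\Psi_2,\Phi,\Phi_3,\Phi_{12},\Phi_{123}$ are the vertices of two reciprocal $(6,10)$ figures. These satisfy $$Q(\Phi_1,\Phi_2,\Psi,\Psi_{12})=Q(\Psi_2,\Psi_1,\Phi_{12},\Phi),\qquad Q(\Psi_1,\Psi_2,\Phi_3,\Phi_{123})=Q(\Phi_{23},\Phi_{13},\Psi_{12},\Psi).$$
   Context: The plane is identified with $\mathbb{C}$; $Q(P_1,P_2,P_3,P_4)=\frac{(P_1-P_2)(P_3-P_4)}{(P_2-P_3)(P_4-P_1)}$. A $(6,10)$ figure (first kind) has vertices $\Psi,\Psi_{12},\Phi_1,\Phi_2,\Phi_{13},\Phi_{23}$ and the ten straight edges $\Phi_1\Phi_2$, $\Psi\Phi_1$, $\Psi\Phi_2$, $\Psi\Phi_{13}$, $\Psi\Phi_{23}$, $\Phi_{13}\Phi_{23}$, $\Psi_{12}\Phi_{13}$, $\Psi_{12}\Phi_{23}$, $\Psi_{12}\Phi_1$, $\Psi_{12}\Phi_2$ (an octahedral figure with the edges $\Phi_1\Phi_{13}$ and $\Phi_2\Phi_{23}$ removed). Its reciprocal has vertices $\Psi_1,\Psi_2,\Phi,\Phi_3,\Phi_{12},\Phi_{123}$ and ten edges; the two figures are reciprocal when the corresponding edges are parallel, the correspondence being: $\Phi\Phi_{12}\parallel\Phi_1\Phi_2$, $\Psi_1\Phi_3\parallel\Psi\Phi_{13}$, $\Psi_2\Phi_3\parallel\Psi\Phi_{23}$,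 $\Phi\Psi_1\parallel\Psi\Phi_1$, $\Phi\Psi_2\parallel\Psi\Phi_2$, $\Phi_3\Phi_{123}\parallel\Phi_{13}\Phi_{23}$, $\Psi_2\Phi_{123}\parallel\Psi_{12}\Phi_{23}$, $\Psi_1\Phi_{123}\parallel\Psi_{12}\Phi_{13}$, $\Phi_{12}\Psi_2\parallel\Psi_{12}\Phi_2$, $\Phi_{12}\Psi_1\parallel\Psi_{12}\Phi_1$ (lines meeting at a vertex in one figure then form closed polygons in the other, in Maxwell's sense). Parallelism is expressed by the real dilations in the displayed equations. *)

(* Defs.v *)
From HB Require Import structures.
From mathcomp Require Import all_boot all_order all_algebra.
From mathcomp Require Import complex.
Set Implicit Arguments. Unset Strict Implicit. Unset Printing Implicit Defensive.
Import Order.TTheory GRing.Theory Num.Theory.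
Local Open Scope ring_scope.

Definition cr {R : rcfType} (x : R) : R[i] := (x%:C)%C.

Definition Qcr {R : rcfType} (P1 P2 P3 P4 : R[i]) : R[i] :=
  (P1 - P2) * (P3 - P4) / ((P2 - P3) * (P4 - P1)).

Definition collinear {R : rcfType} (z1 z2 z3 : R[i]) : Prop :=
  exists r s : R, (r != 0 \/ s != 0) /\ cr r * (z2 - z1) + cr s * (z3 - z1) = 0.

Definition general_position {R : rcfType} (s : seq R[i]) : Prop :=
  forall i j k : nat, (i < j)%N -> (j < k)%N -> (k < size s)%N ->
    ~ collinear (nth 0 s i) (nth 0 s j) (nth 0 s k).

Definition recip_eqs {R : rcfType}
    (Psi Psi12 Phi1 Phi2 Phi13 Phi23 Psi1 Psi2 Phi Phi3 Phi12 Phi123 : R[i])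
    (a b c d e a3 b2 c1 d2 e1 : R) : Prop :=
  Phi12 - Phi = cr a * (Phi1 - Phi2)
   /\ Phi13 - Psi = cr b * (Psi1 - Phi3)
   /\ Phi23 - Psi = cr c * (Psi2 - Phi3)
   /\ Psi1 - Phi = cr d * (Phi1 - Psi)
   /\ Psi2 - Phi = cr e * (Phi2 - Psi)
   /\ Phi123 - Phi3 = cr a3 * (Phi13 - Phi23)
   /\ Phi123 - Psi2 = cr b2 * (Psi12 - Phi23)
   /\ Phi123 - Psi1 = cr c1 * (Psi12 - Phi13)
   /\ Psi12 - Phi2 = cr d2 * (Phi12 - Psi2)
   /\ Psi12 - Phi1 = cr e1 * (Phi12 - Psi1).

Definition reciprocal_6_10 {R : rcfType}
    (Psi Psi12 Phi1 Phi2 Phi13 Phi23 Psi1 Psi2 Phi Phi3 Phi12 Phi123 : R[i]) : Prop :=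
  exists a b c d e a3 b2 c1 d2 e1 : R,
    recip_eqs Psi Psi12 Phi1 Phi2 Phi13 Phi23 Psi1 Psi2 Phi Phi3 Phi12 Phi123
              a b c d e a3 b2 c1 d2 e1.

(* Main.v *)
Require Import Defs.
From HB Require Import structures.
From mathcomp Require Import all_boot all_order all_algebra.
From mathcomp Require Import complex.
Import Order.TTheory GRing.Theory Num.Theory.
Local Open Scope ring_scope.


From mathcomp Require Import ring lra.

Section Helpers.
Context {R : rcfType}.
Lemma crD (x y : R) : cr (x + y) = cr x + cr y. Proof. exact: rmorphD. Qed.
Lemma crB (x y : R) : cr (x - y) = cr x - cr y. Proof. exact: rmorphB. Qed.
Lemma crM (x y : R) : cr (x * y) = cr x * cr y. Proof. exact: rmorphM. Qed.
Lemma crV (x : R) : cr (x^-1) = (cr x)^-1. Proof. exact: fmorphV. Qed.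
Lemma cr1 : cr (1 : R) = 1. Proof. exact: rmorph1. Qed.
Lemma cr0 : cr (0 : R) = 0. Proof. exact: rmorph0. Qed.
Lemma crN (x : R) : cr (- x) = - cr x. Proof. exact: rmorphN. Qed.
Lemma cr_eq0 (x : R) : (cr x == 0) = (x == 0).
Proof. by rewrite /cr -(rmorph0 (real_complex R)) (inj_eq (@complexI R)). Qed.

Lemma ncol (z1 z2 z3 : R[i]) (x y : R) : ~ collinear z1 z2 z3 ->
  cr x * (z2 - z1) + cr y * (z3 - z1) = 0 -> x = 0 /\ y = 0.
Proof.
move=> H E.
have [->|hx] := eqVneq x 0; have [->|hy] := eqVneq y 0 => //;
  exfalso; apply: H; exists x, y; split => //; by [left | right].
Qed.

Lemma ncol_neq (z1 z2 z3 : R[i]) : ~ collinear z1 z2 z3 -> z2 - z1 != 0.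
Proof.
move=> H; apply/negP => /eqP h; apply: H; exists 1, 0; split.
  by left; exact: oner_neq0.
by rewrite h mulr0 cr0 mul0r addr0.
Qed.

Lemma ncol_neq3 (z1 z2 z3 : R[i]) : ~ collinear z1 z2 z3 -> z3 - z1 != 0.
Proof.
move=> H; apply/negP => /eqP h; apply: H; exists 0, 1; split.
  by right; exact: oner_neq0.
by rewrite h mulr0 cr0 mul0r addr0.
Qed.

Lemma Qlam (N1 D1 N2 D2 l : R[i]) : N2 = l * N1 -> D2 = l * D1 -> l != 0 ->
  N1 / D1 = N2 / D2.
Proof. by move=> -> -> hl; rewrite invfM mulrACA divff // mul1r. Qed.
End Helpers.
Arguments ncol {R z1 z2 z3 x y}.
Arguments ncol_neq {R z1 z2 z3}.
Arguments ncol_neq3 {R z1 z2 z3}.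

Theorem theorem5 (R : rcfType) :
  (* (i) *)
  (forall (Psi Psi12 Phi1 Phi2 Phi13 Phi23 Psi1 Psi2 Phi Phi3 Phi12 Phi123 : R[i])
          (a b c d e a3 b2 c1 d2 e1 : R),
     general_position [:: Psi; Psi12; Phi1; Phi2; Phi13; Phi23] ->
     general_position [:: Psi1; Psi2; Phi; Phi3; Phi12; Phi123] ->
     recip_eqs Psi Psi12 Phi1 Phi2 Phi13 Phi23 Psi1 Psi2 Phi Phi3 Phi12 Phi123
               a b c d e a3 b2 c1 d2 e1 ->
     let D := a * d + e * d - e * a in
     [/\ a3 = a / (b * c * D + a * (b - c)),
         b2 = (a3 * (c - b) + 1) / c,
         c1 = (a3 * (c - b) + 1) / b,
         d2 = d / D &
         e1 = e / D])
  /\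
  (* (ii) *)
  (forall (Phi Phi1 Phi2 Phi3 Psi : R[i]),
     general_position [:: Phi; Phi1; Phi2; Phi3; Psi] ->
     forall a b c d e : R,
     a != 0 -> b != 0 -> c != 0 -> d != 0 -> e != 0 ->
     let D := a * d + e * d - e * a in
     D != 0 -> b * c * D + a * (b - c) != 0 ->
     let a3 := a / (b * c * D + a * (b - c)) in
     let b2 := (a3 * (c - b) + 1) / c in
     let c1 := (a3 * (c - b) + 1) / b in
     let d2 := d / D in
     let e1 := e / D in
     exists Psi12 Phi13 Phi23 Psi1 Psi2 Phi12 Phi123 : R[i],
       [/\ recip_eqs Psi Psi12 Phi1 Phi2 Phi13 Phi23 Psi1 Psi2 Phi Phi3 Phi12 Phi123
                     a b c d e a3 b2 c1 d2 e1,
           reciprocal_6_10 Psi Psi12 Phi1 Phi2 Phi13 Phi23 Psi1 Psi2 Phi Phi3 Phi12 Phi123,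
           Qcr Phi1 Phi2 Psi Psi12 = Qcr Psi2 Psi1 Phi12 Phi &
           Qcr Psi1 Psi2 Phi3 Phi123 = Qcr Phi23 Phi13 Psi12 Psi]).
Proof.
split.
  move=> Psi Psi12 Phi1 Phi2 Phi13 Phi23 Psi1 Psi2 Phi Phi3 Phi12 Phi123
    a b c d e a3 b2 c1 d2 e1 G1 G2 [E1 [E2 [E3 [E4 [E5 [E6 [E7 [E8 [E9 E10]]]]]]]]] D.
  have nc_a : ~ collinear Psi Phi1 Phi2 := G1 0%N 2%N 3%N erefl erefl erefl.
  have nc_b : ~ collinear Psi12 Phi13 Phi23 := G1 1%N 4%N 5%N erefl erefl erefl.
  have n_a : Phi12 - Phi != 0 := ncol_neq (G2 2%N 4%N 5%N erefl erefl erefl).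
  have n_b : Phi13 - Psi != 0 := ncol_neq (G1 0%N 4%N 5%N erefl erefl erefl).
  have n_c : Phi23 - Psi != 0 := ncol_neq3 (G1 0%N 1%N 5%N erefl erefl erefl).
  have n_d : Phi - Psi1 != 0 := ncol_neq (G2 0%N 2%N 3%N erefl erefl erefl).
  have ha : a != 0 by apply: contraNneq n_a => h; rewrite E1 h cr0 mul0r.
  have hb : b != 0 by apply: contraNneq n_b => h; rewrite E2 h cr0 mul0r.
  have hc : c != 0 by apply: contraNneq n_c => h; rewrite E3 h cr0 mul0r.
  have hd : d != 0.
    by apply: contraNneq n_d => h; rewrite -opprB E4 h cr0 mul0r oppr0.
  have hDdef : D = a * d + e * d - e * a by [].
  clearbody D.
  have P12 : Phi12 = Phi + cr a * (Phi1 - Phi2) by rewrite -E1 addrC subrK.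
  have P1 : Psi1 = Phi + cr d * (Phi1 - Psi) by rewrite -E4 addrC subrK.
  have P2 : Psi2 = Phi + cr e * (Phi2 - Psi) by rewrite -E5 addrC subrK.
  have P13 : Phi13 = Psi + cr b * (Psi1 - Phi3) by rewrite -E2 addrC subrK.
  have P23 : Phi23 = Psi + cr c * (Psi2 - Phi3) by rewrite -E3 addrC subrK.
  have Q9 : Psi12 = Phi2 + cr d2 * (Phi12 - Psi2) by rewrite -E9 addrC subrK.
  have P123 : Phi123 = Phi3 + cr a3 * (Phi13 - Phi23) by rewrite -E6 addrC subrK.
  have Ealpha : cr (-1 + d2*a - e1*(a-d)) * (Phi1 - Psi)
              + cr (1 - d2*(a+e) + e1*a) * (Phi2 - Psi) = 0.
    have Z10 : Psi12 - Phi1 - cr e1 * (Phi12 - Psi1) = 0 by rewrite E10 subrr.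
    rewrite -Z10 Q9 P12 P1 P2 !(crD, crN, crM, cr1); ring.
  have [hal hbe] := ncol nc_a Ealpha.
  have hDd : D * d2 = d.
    apply/eqP; rewrite -subr_eq0; apply/eqP.
    transitivity (a * (-1 + d2*a - e1*(a-d)) + (a-d) * (1 - d2*(a+e) + e1*a)).
      by rewrite hDdef; ring.
    by rewrite hal hbe; ring.
  have hDe : D * e1 = e.
    apply/eqP; rewrite -subr_eq0; apply/eqP.
    transitivity ((a+e) * (-1 + d2*a - e1*(a-d)) + a * (1 - d2*(a+e) + e1*a)).
      by rewrite hDdef; ring.
    by rewrite hal hbe; ring.
  have hD : D != 0 by apply: contraNneq hd => h; rewrite -hDd h mul0r.
  have hd2 : d2 = d / D by rewrite -hDd mulrC mulKf.
  have he1 : e1 = e / D by rewrite -hDe mulrC mulKf.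
  have hD' : cr a * cr d + cr e * cr d - cr e * cr a != 0.
    by rewrite -!crM -crD -crB -hDdef cr_eq0.
  have [K hKdef] : exists K, K = b * c * D + a * (b - c) by eexists.
  rewrite -hKdef.
  have I1 : cr (c*K) * (Phi3 - Psi2) + cr (c*a) * (Phi13 - Phi23)
            - cr (a*(c-b)+K) * (Psi12 - Phi23) = 0.
    rewrite Q9 P13 P23 P12 P1 P2 hd2 hKdef hDdef !(crD, crN, crM, cr1, crV).
    field; exact: hD'.
  have E12 : Phi3 + cr a3 * (Phi13 - Phi23) - Psi2 - cr b2 * (Psi12 - Phi23) = 0.
    by rewrite -P123 E7 subrr.
  have Ecol : cr (c*K*a3 - c*a) * (Phi13 - Psi12)
     + cr (-(c*K*a3 - c*a) + (c*K*b2 - (a*(c-b)+K))) * (Phi23 - Psi12) = 0.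
    have := congr2 (fun x y => cr (c*K) * x - y) E12 I1.
    rewrite /= mulr0 subrr => <-.
    rewrite !(crD, crN, crM, cr1); ring.
  have [hr hs] := ncol nc_b Ecol.
  have hKa : K * a3 = a.
    have : c * (K * a3 - a) = 0 by rewrite -hr; ring.
    by move/eqP; rewrite mulf_eq0 (negbTE hc) /= subr_eq0 => /eqP.
  have hK : K != 0 by apply: contraNneq ha => h; rewrite -hKa h mul0r.
  have ha3 : a3 = a / K by rewrite -hKa mulrC mulKf.
  have hb2 : c * K * b2 = a * (c - b) + K.
    by move: hs; rewrite hr oppr0 add0r => /eqP; rewrite subr_eq0 => /eqP.
  have hK' : cr K != 0 by rewrite cr_eq0.
  have E13 : Phi3 + cr a3 * (Phi13 - Phi23) - Psi1 - cr c1 * (Psi12 - Phi13) = 0.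
    by rewrite -P123 E8 subrr.
  have I2 : cr K * (Phi3 - Psi1) + cr a * (Phi13 - Phi23)
            - cr (c*D) * (Psi12 - Phi13) = 0.
    rewrite Q9 P13 P23 P12 P1 P2 hd2 hKdef hDdef !(crD, crN, crM, cr1, crV).
    field; exact: hD'.
  have Ecol2 : cr (K*c1 - c*D) * (Phi13 - Psi12) + cr 0 * (Phi23 - Psi12) = 0.
    have := congr2 (fun x y => cr K * x - y) E13 I2.
    rewrite /= mulr0 subrr => <-.
    rewrite ha3 !(crD, crN, crM, cr1, crV, cr0); field; exact: hK'.
  have [hc1 _] := ncol nc_b Ecol2.
  have eK : a * (c - b) + K = b * c * D by rewrite hKdef; ring.
  split => //.
  - have -> : b2 = (c * K * b2) / (c * K) by field; rewrite ?hK ?hc.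
    by rewrite hb2 ha3; field; rewrite ?hK ?hc.
  - have -> : c1 = (K * c1) / K by field; rewrite ?hK ?hc.
    move/eqP: hc1; rewrite subr_eq0 => /eqP ->.
    rewrite ha3.
    have -> : a / K * (c - b) + 1 = (a * (c - b) + K) / K.
      by field; rewrite ?hK ?hc.
    by rewrite eK; field; rewrite ?hK ?hc ?hb.
move=> Phi Phi1 Phi2 Phi3 Psi _ a b c d e ha hb hc hd he D hD hK a3 b2 c1 d2 e1.
have hDdef : D = a * d + e * d - e * a by [].
have ha3 : a3 = a / (b * c * D + a * (b - c)) by [].
have hb2 : b2 = (a3 * (c - b) + 1) / c by [].
have hc1 : c1 = (a3 * (c - b) + 1) / b by [].
have hd2 : d2 = d / D by [].
have he1 : e1 = e / D by [].
clearbody e1 d2 c1 b2 a3 D.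
have ha' : cr a != 0 by rewrite cr_eq0.
have hb' : cr b != 0 by rewrite cr_eq0.
have hc' : cr c != 0 by rewrite cr_eq0.
have hd' : cr d != 0 by rewrite cr_eq0.
have he' : cr e != 0 by rewrite cr_eq0.
have hD' : cr D != 0 by rewrite cr_eq0.
have hK' : cr (b * c * D + a * (b - c)) != 0 by rewrite cr_eq0.
rewrite hDdef !(crD, crN, crM) in hD' hK'.
have [Psi1 hPsi1] : exists Psi1, Psi1 = Phi + cr d * (Phi1 - Psi) by eexists.
have [Psi2 hPsi2] : exists Psi2, Psi2 = Phi + cr e * (Phi2 - Psi) by eexists.
have [Phi12 hPhi12] : exists Phi12, Phi12 = Phi + cr a * (Phi1 - Phi2) by eexists.
have [Phi13 hPhi13] : exists Phi13, Phi13 = Psi + cr b * (Psi1 - Phi3) by eexists.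
have [Phi23 hPhi23] : exists Phi23, Phi23 = Psi + cr c * (Psi2 - Phi3) by eexists.
have [Psi12 hPsi12] : exists Psi12, Psi12 = Phi2 + cr d2 * (Phi12 - Psi2) by eexists.
have [Phi123 hPhi123] : exists Phi123, Phi123 = Phi3 + cr a3 * (Phi13 - Phi23) by eexists.
exists Psi12, Phi13, Phi23, Psi1, Psi2, Phi12, Phi123.
have RE : recip_eqs Psi Psi12 Phi1 Phi2 Phi13 Phi23 Psi1 Psi2 Phi Phi3 Phi12 Phi123
            a b c d e a3 b2 c1 d2 e1.
  rewrite /recip_eqs; subst; rewrite !(crD, crN, crM, cr1, crV).
  by (repeat split); field; repeat (apply/andP; split); try assumption.
split => //.
- by exists a, b, c, d, e, a3, b2, c1, d2, e1.
- rewrite /Qcr; apply: (@Qlam _ _ _ _ _ (cr D)).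
  + subst; rewrite !(crD, crN, crM, cr1, crV).
    by field; repeat (apply/andP; split); try assumption.
  + subst; rewrite !(crD, crN, crM, cr1, crV).
    by field; repeat (apply/andP; split); try assumption.
  + by subst; rewrite !(crD, crN, crM).
- rewrite /Qcr; apply: (@Qlam _ _ _ _ _ (cr (b * c * D + a * (b - c)) / cr D)).
  + subst; rewrite !(crD, crN, crM, cr1, crV).
    by field; repeat (apply/andP; split); try assumption.
  + subst; rewrite !(crD, crN, crM, cr1, crV).
    by field; repeat (apply/andP; split); try assumption.
  + subst; rewrite !(crD, crN, crM) mulf_eq0 negb_or hK'.
    by rewrite invr_eq0.
Qed.
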